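(* Let $h$ be a penalty function on $\Delta$ with choice map $Q$ and let $p\in\Delta$. If $F_h(p,y_j)\to+\infty$ for some sequence $y_j\in\mathbb{R}^n$, then the sequence $x_j=Q(y_j)$ has no limit points in $\Delta_p$; in particular, $\liminf_{j\to\infty}\min\{x_{j,\alpha}:\alpha\in\operatorname{supp}(p)\}=0$.
   Context: $\Delta$ is the unit simplex of $\mathbb{R}^n$. A penalty function on $\Delta$ is $h:\Delta\to\mathbb{R}$, continuous, $C^\infty$ on the relative interior of every face of $\Delta$, and strongly convex: $h(tx_1+(1-t)x_2)\le th(x_1)+(1-t)h(x_2)-\tfrac12Kt(1-t)\|x_1-x_2\|^2$ for some $K>0$. $Q(y)=\arg\max_{x\in\Delta}\{\langle y,x\rangle-h(x)\}$; $h^*(y)=\max_{x\in\Delta}\{\langle y,x\rangle-h(x)\}$; Fenchel coupling $F_h(p,y)=h(p)+h^*(y)-\langle y,p\rangle$. $\Delta_p=\{x\in\Delta:\operatorname{supp}(x)\supseteq\operatorname{supp}(p)\}$. *)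

(* Defs.v *)
From HB Require Import structures.
From mathcomp Require Import all_boot all_order all_algebra.
From mathcomp Require Import all_classical all_reals all_analysis.
Set Implicit Arguments. Unset Strict Implicit. Unset Printing Implicit Defensive.
Import Order.TTheory GRing.Theory Num.Theory.
Import numFieldNormedType.Exports.
Local Open Scope classical_set_scope.
Local Open Scope ring_scope.

Section Defs.
Variables (R : realType) (n : nat).
Notation V := 'rV[R]_n.

Definition dotp (y x : V) : R := \sum_(i < n) y ord0 i * x ord0 i.
Definition sqnorm (x : V) : R := \sum_(i < n) (x ord0 i) ^+ 2.

Definition simplex : set V :=
  [set x | (forall i, 0 <= x ord0 i) /\ \sum_(i < n) x ord0 i = 1].

Definition supp (x : V) : {set 'I_n} := [set i | x ord0 i != 0].

Definition simplex_p (p : V) : set V :=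
  [set x | simplex x /\ (supp p \subset supp x)].

(* Relative interior of the face of Delta spanned by the index set S
   (nonempty S): the points of Delta whose support is exactly S. *)
Definition rel_int_face (S : {set 'I_n}) : set V :=
  [set x | simplex x /\ supp x = S].

Definition tangent (S : {set 'I_n}) : set V :=
  [set v | \sum_(i < n) v ord0 i = 0 /\ (forall i, i \notin S -> v ord0 i = 0)].

Fixpoint iter_dder (vs : seq V) (f : V -> R) : V -> R :=
  match vs with
  | [::] => f
  | v :: vs' => fun x => 'D_v (iter_dder vs' f) x
  end.

(* f is C^infty on the relative interior of the face spanned by S:
   all iterated directional derivatives along tangent directions exist
   at every point of the relative interior and are continuous there. *)
Definition smooth_on_face (S : {set 'I_n}) (f : V -> R) : Prop :=
  forall (vs : seq V), (forall v, v \in vs -> tangent S v) ->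
    (forall v, tangent S v ->
       forall x, rel_int_face S x -> derivable (iter_dder vs f) x v) /\
    {within rel_int_face S, continuous (iter_dder vs f)}.

Definition strongly_convex_on_simplex (h : V -> R) (K : R) : Prop :=
  forall x1 x2 : V, simplex x1 -> simplex x2 -> forall t : R, 0 <= t <= 1 ->
    h (t *: x1 + (1 - t) *: x2) <=
      t * h x1 + (1 - t) * h x2 - 2^-1 * K * t * (1 - t) * sqnorm (x1 - x2).

(* Penalty function on Delta (only its values on Delta matter). *)
Definition penalty (h : V -> R) : Prop :=
  {within simplex, continuous h} /\
  (forall S : {set 'I_n}, S != finset.set0 -> smooth_on_face S h) /\
  (exists K : R, 0 < K /\ strongly_convex_on_simplex h K).

Definition is_argmax (h : V -> R) (y x : V) : Prop :=
  simplex x /\ forall x', simplex x' -> dotp y x' - h x' <= dotp y x - h x.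

Definition choice_map (h : V -> R) (y : V) : V := xget 0 [set x | is_argmax h y x].

Definition conj_h (h : V -> R) (y : V) : R :=
  sup [set dotp y x - h x | x in simplex].

Definition fenchel (h : V -> R) (p y : V) : R := h p + conj_h h y - dotp y p.

End Defs.

(* Main.v *)
Require Import Defs.
From HB Require Import structures.
From mathcomp Require Import all_boot all_order all_algebra.
From mathcomp Require Import all_classical all_reals all_analysis.
From mathcomp Require Import ring lra.
Import Order.TTheory GRing.Theory Num.Theory.
Import numFieldNormedType.Exports.
Local Open Scope classical_set_scope.
Local Open Scope ring_scope.

Section Helpers.
Variables (R : realType) (n : nat).
Notation V := 'rV[R]_n.

Lemma cont_sum (I : Type) (r : seq I) (f : I -> V -> R) :
  (forall i, continuous (f i)) -> continuous (fun x => \sum_(i <- r) f i x).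
Proof.
move=> fc; elim: r => [|a r IH].
  have -> : (fun x : V => \sum_(i <- [::]) f i x) = fun=> 0.
    by apply: funext => x; rewrite big_nil.
  exact: cst_continuous.
have -> : (fun x => \sum_(i <- a :: r) f i x) =
    (fun x => f a x + \sum_(i <- r) f i x).
  by apply: funext => x; rewrite big_cons.
move=> x; exact: (cvgD (fc a x) (IH x)).
Qed.

Lemma dotp_cont (y : V) : continuous (dotp y).
Proof.
rewrite /dotp; apply: cont_sum => i x.
exact: (cvgM (cvg_cst (y ord0 i)) (@coord_continuous R 1 n ord0 i x)).
Qed.

Lemma simplex_closed : closed (@simplex R n).
Proof.
have -> : @simplex R n = (\bigcap_(i in [set: 'I_n])
   ((fun x : V => x ord0 i) @^-1` [set t | 0 <= t])) `&`
   ((fun x : V => \sum_(i < n) x ord0 i) @^-1` [set 1]).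
  apply/seteqP; split => x /=.
    by case=> H1 H2; split=> // i _; exact: H1.
  by case=> H1 H2; split=> // i; exact: H1.
apply: closedI.
  apply: closed_bigI => i _; apply: preimage_closed; last exact: closed_ge.
  by move=> x _; exact: coord_continuous.
apply: preimage_closed; last exact: closed_eq.
by move=> x _; apply: cont_sum => i; exact: coord_continuous.
Qed.

Lemma simplex_le1 (x : V) i : simplex x -> x ord0 i <= 1.
Proof.
case=> H0 <-; rewrite (bigD1 i) //= lerDl; apply: sumr_ge0 => j _; exact: H0.
Qed.

Lemma simplex_compact : compact (@simplex R n).
Proof.
have Bc := @rV_compact R n (fun=> `[(0:R), 1]%classic) (fun=> @segment_compact R 0 1).
apply: (subclosed_compact simplex_closed Bc).
move=> x Sx i /=; rewrite in_itv /=; apply/andP; split.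
  exact: Sx.1.
exact: simplex_le1.
Qed.

Lemma argmax_ex (h : V -> R) (y : V) : {within @simplex R n, continuous h} ->
  (@simplex R n) !=set0 -> exists x, is_argmax h y x.
Proof.
move=> hc S0.
have fc : {within @simplex R n, continuous (fun x => dotp y x - h x)}.
  move=> x; exact: (cvgB (@continuous_subspaceT _ _ (@simplex R n) _ (dotp_cont y) x) (hc x)).
have [c cA cmax] := EVT_max_rV S0 simplex_compact fc.
exists c; split; first by rewrite inE in cA.
by move=> x' Sx'; apply: cmax; rewrite inE.
Qed.

Lemma conj_le (h : V -> R) (y x : V) : is_argmax h y x ->
  conj_h h y <= dotp y x - h x.
Proof.
case=> Sx xm; apply: ge_sup.
  by exists (dotp y x - h x); exists x.
by move=> _ [x' Sx' <-]; exact: xm.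
Qed.

Lemma key (h : V -> R) (p y x : V) (s : R) : is_argmax h y x -> 0 < s ->
  simplex (x + s *: (x - p)) ->
  fenchel h p y <= h p - h x + (h (x + s *: (x - p)) - h x) / s.
Proof.
move=> xa s0 Sw.
have dw : dotp y (x + s *: (x - p)) = dotp y x + s * (dotp y x - dotp y p).
  rewrite /dotp mulrBr !mulr_sumr -sumrB -big_split /=.
  by apply: eq_bigr => i _; rewrite !mxE; ring.
have := xa.2 _ Sw; rewrite dw => H.
have H2 : dotp y x - dotp y p <= (h (x + s *: (x - p)) - h x) / s.
  rewrite ler_pdivlMr //; nra.
have := @conj_le h y x xa; rewrite /fenchel.
move: H2; set q := _ / s; lra.
Qed.

End Helpers.

Theorem propositionC4 (R : realType) (n : nat) (h : 'rV[R]_n -> R)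
    (p : 'rV[R]_n) (y : nat -> 'rV[R]_n) :
  penalty h -> simplex p ->
  (fun j => fenchel h p (y j)) @ \oo --> +oo ->
  let x := fun j => choice_map h (y j) in
  (forall z, simplex_p p z -> ~ cluster (x @ \oo) z) /\
  limn_inf (fun j => \big[Num.min/1]_(i in supp p) x j ord0 i) = 0.
Proof.
move=> [hc _] Sp Fy x.
have S0 : (@simplex R n) !=set0 by exists p.
have Sxj j : is_argmax h (y j) (x j).
  by apply: (xgetPex 0); exact: argmax_ex.
have [hM hMS hMmax] := EVT_max_rV S0 (@simplex_compact R n) hc.
have [hm hmS hmmin] := EVT_min_rV S0 (@simplex_compact R n) hc.
rewrite inE in hMS; rewrite inE in hmS.
have hle v : simplex v -> h v <= h hM by move=> Sv; apply: hMmax; rewrite inE.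
have hge v : simplex v -> h hm <= h v by move=> Sv; apply: hmmin; rewrite inE.
have part1 : forall z, simplex_p p z -> ~ cluster (x @ \oo) z.
  move=> z [Sz sub] cl.
  set m0 := \big[Num.min/1]_(i in supp p) z ord0 i.
  have m0pos : 0 < m0.
    rewrite /m0; elim/big_rec: _ => // i t ip tpos; rewrite lt_min tpos andbT.
    have := fintype.subsetP sub i ip; rewrite inE => nz.
    by rewrite lt_neqAle eq_sym nz; exact: Sz.1.
  have m0le i : i \in supp p -> m0 <= z ord0 i.
    by move=> ip; rewrite /m0 (bigD1 i) //= ge_min lexx.
  set s := m0 / 2.
  have s0 : 0 < s by rewrite /s divr_gt0.
  set B := (h hM - h hm) + (h hM - h hm) / s.
  have ev : \forall j \near \oo, B < fenchel h p (y j).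
    by move/cvgryPgt : Fy; apply.
  have [v [[j Bj <-] bz]] := cl [set x j | j in [set j | B < fenchel h p (y j)]]
     (ball z s) (filterS (fun j (Hj : B < fenchel h p (y j)) => ex_intro2 _ _ j Hj erefl) ev)
     (nbhsx_ballx z s s0).
  case: bz => _ bz.
  have Sx := (Sxj j).1.
  have xge i : i \in supp p -> s <= x j ord0 i.
    move=> ip; have := bz ord0 i; rewrite /ball /= => /ltW.
    have := m0le i ip; rewrite ler_norml => le1 /andP[_ le2].
    have : m0 = s + s by rewrite /s -splitr.
    lra.
  have Sw : simplex (x j + s *: (x j - p)).
    split.
      move=> i; rewrite !mxE.
      have [ip|nip] := boolP (i \in supp p).
        have := xge i ip; have := @simplex_le1 R n p i Sp; have := Sx.1 i; nra.
      move: nip; rewrite inE negbK => /eqP ->.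
      have := Sx.1 i; nra.
    under eq_bigr do rewrite !mxE.
    rewrite big_split /= -mulr_sumr.
    by rewrite sumrB Sx.2 Sp.2 subrr mulr0 addr0.
  have := @key R n h p (y j) (x j) s (Sxj j) s0 Sw.
  have q : (h (x j + s *: (x j - p)) - h (x j)) / s <= (h hM - h hm) / s.
    apply: ler_wpM2r; first by rewrite invr_ge0 ltW.
    have := hle _ Sw; have := hge _ Sx; lra.
  have := hle _ Sp; have := hge _ Sx; move: q Bj; rewrite /B /=.
  set q1 := _ / s; set q2 := _ / s; lra.
split => //.
set u := fun j => \big[Num.min/1]_(i in supp p) x j ord0 i.
have u_ge0 j : 0 <= u j.
  rewrite /u; elim/big_rec: _ => // i t _ t0; rewrite le_min t0 andbT.
  exact: (Sxj j).1.1 i.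
have u_le1 j : u j <= 1.
  by rewrite /u; elim/big_rec: _ => // i t _ t1; rewrite ge_min t1 orbT.
have u_le j i : i \in supp p -> u j <= x j ord0 i.
  by move=> ip; rewrite /u (bigD1 i) //= ge_min lexx.
have freq e : 0 < e -> forall N, exists k, (N <= k)%N /\ u k < e.
  move=> e0 N; have [//|nH] := pselect (exists k, (N <= k)%N /\ u k < e).
  exfalso.
  have ge k : (N <= k)%N -> e <= u k.
    by move=> Nk; rewrite leNgt; apply/negP => lt; apply: nH; exists k.
  set K := @simplex R n `&` [set v : 'rV[R]_n | forall i, i \in supp p -> e <= v ord0 i].
  have Kcl : closed K.
    apply: closedI; first exact: simplex_closed.
    have -> : [set v : 'rV[R]_n | forall i, i \in supp p -> e <= v ord0 i] =
       \bigcap_(i in [set i | i \in supp p]) ((fun v : 'rV[R]_n => v ord0 i) @^-1` [set t | e <= t]).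
      by apply/seteqP; split => v /= H i; [move=> /H | exact: H].
    apply: closed_bigI => i _; apply: preimage_closed; last exact: closed_ge.
    by move=> v _; exact: coord_continuous.
  have Kc : compact K.
    by apply: (subclosed_compact Kcl (@simplex_compact R n)); move=> v [].
  have [z [Kz clz]] : K `&` cluster (x @ \oo) !=set0.
    apply: Kc.
    exists N => // k /= Nk; split; first exact: (Sxj k).1.
    by move=> i ip; apply: le_trans (ge k Nk) (u_le k i ip).
  apply: (part1 z) clz; split; first exact: Kz.1.
  apply/fintype.subsetP => i ip; rewrite inE gt_eqF //.
  exact: lt_le_trans e0 (Kz.2 i ip).
rewrite limn_infE; last first.
  exists 1; split; first exact: num_real.
  move=> M M1 j _ /=; rewrite ger0_norm //.
  by have := u_le1 j; lra.
apply/eqP; rewrite eq_le; apply/andP; split.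
  apply/ler_addgt0Pr => e e0; rewrite add0r; apply: ge_sup; first by exists (infs u 0); exists 0.
  move=> _ [k _ <-]; have [j [kj uj]] := freq e e0 k.
  apply: le_trans (ltW uj); apply: ge_inf; last by exists j.
  by exists 0 => _ [l _ <-]; exact: u_ge0.
have lbk k : 0 <= infs u k.
  apply: lb_le_inf; first by exists (u k); exists k => /=.
  by move=> _ [l _ <-].
apply: le_trans (lbk 0%N) _; apply: ub_le_sup; last by exists 0%N.
exists 1 => _ [k _ <-]; apply: le_trans (u_le1 k); apply: ge_inf; last by exists k => /=.
by exists 0 => _ [l _ <-]; exact: u_ge0.
Qed.
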